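(* Let $H$ be a $3$-uniform hypergraph on $7$ vertices not containing a Fano plane. If some vertex $v$ of $H$ satisfies $d(v)\ge 11$ and $e(H\setminus v)\ge 18$, then $H\setminus v$ is isomorphic to $B_6$.
   Context: $d(v)$ is the number of edges of $H$ containing $v$; $H\setminus v$ is the hypergraph obtained by deleting $v$ and all edges containing it; $e(\cdot)$ denotes the number of edges. ''Containing'' means having a (not necessarily induced) subhypergraph isomorphic to it. The Fano plane is the hypergraph on vertex set $\{1,\dots,7\}$ with edges $123,345,156,147,367,257,246$. $B_6$ is the hypergraph on $6$ vertices with a partition into two disjoint sets $X,Y$ of size $3$ each whose edges are exactly the triples meeting both $X$ and $Y$. *)

(* Defs.v *)
From mathcomp Require Import all_boot.
Set Implicit Arguments. Unset Strict Implicit. Unset Printing Implicit Defensive.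

Definition hypergraph (n : nat) := {set {set 'I_n}}.

Definition uniform3 n (H : hypergraph n) : Prop := forall e, e \in H -> #|e| = 3.

(* H contains F: a (not necessarily induced) subhypergraph isomorphic to F,
   i.e. an injective vertex map sending every edge of F to an edge of H. *)
Definition contains m n (F : hypergraph m) (H : hypergraph n) : Prop :=
  exists f : 'I_m -> 'I_n, injective f /\ forall e, e \in F -> f @: e \in H.

Definition tri (a b c : nat) : {set 'I_7} := [set inord a; inord b; inord c].

(* Fano plane: vertices 1..7 of the paper are 0..6 here;
   edges 123,345,156,147,367,257,246. *)
Definition Fano : hypergraph 7 :=
  [set tri 0 1 2; tri 2 3 4; tri 0 4 5; tri 0 3 6;
       tri 2 5 6; tri 1 4 6; tri 1 3 5].

(* B_6 on 'I_6 with X = {0,1,2}, Y = {3,4,5}: all triples meeting both X and Y. *)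
Definition B6X : {set 'I_6} := [set i : 'I_6 | i < 3].
Definition B6 : hypergraph 6 :=
  [set e : {set 'I_6} | (#|e| == 3) && (e :&: B6X != set0) && (e :\: B6X != set0)].

Definition deg n (H : hypergraph n) (v : 'I_n) : nat := #|[set e in H | v \in e]|.

(* edge set of H \ v: the edges not containing v (vertex set 'I_n minus v) *)
Definition del n (H : hypergraph n) (v : 'I_n) : hypergraph n :=
  [set e in H | v \notin e].

Definition del_iso_B6 n (H : hypergraph n) (v : 'I_n) : Prop :=
  exists g : 'I_6 -> 'I_n,
    [/\ injective g, g @: setT = [set~ v] & [set g @: e | e : {set 'I_6} in B6] = del H v].

(* Main.v *)
Require Import Defs.
From mathcomp Require Import all_boot zify.
Set Implicit Arguments. Unset Strict Implicit. Unset Printing Implicit Defensive.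

Definition table : seq (seq (seq (seq nat))) := [::
[::[::[::6; 0; 1; 4; 2; 3; 5]; [::6; 0; 1; 5; 2; 3; 4]]; [::[::6; 0; 2; 3; 1; 4; 5]; [::6; 0; 2; 5; 1; 4; 3]]; [::[::6; 0; 3; 2; 1; 5; 4]; [::6; 0; 3; 4; 1; 5; 2]]; [::[::6; 0; 4; 2; 1; 3; 5]; [::6; 0; 4; 5; 1; 3; 2]]; [::[::6; 0; 5; 3; 1; 2; 4]; [::6; 0; 5; 4; 1; 2; 3]]];
[::[::[::6; 0; 1; 4; 2; 3; 5]; [::6; 0; 1; 5; 2; 3; 4]]; [::[::6; 0; 2; 3; 1; 5; 4]; [::6; 0; 2; 4; 1; 5; 3]]; [::[::6; 0; 3; 2; 1; 4; 5]; [::6; 0; 3; 5; 1; 4; 2]]; [::[::6; 0; 4; 3; 1; 2; 5]; [::6; 0; 4; 5; 1; 2; 3]]; [::[::6; 0; 5; 2; 1; 3; 4]; [::6; 0; 5; 4; 1; 3; 2]]];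
[::[::[::6; 0; 1; 3; 2; 4; 5]; [::6; 0; 1; 5; 2; 4; 3]]; [::[::6; 0; 2; 4; 1; 3; 5]; [::6; 0; 2; 5; 1; 3; 4]]; [::[::6; 0; 3; 2; 1; 4; 5]; [::6; 0; 3; 5; 1; 4; 2]]; [::[::6; 0; 4; 2; 1; 5; 3]; [::6; 0; 4; 3; 1; 5; 2]]; [::[::6; 0; 5; 3; 1; 2; 4]; [::6; 0; 5; 4; 1; 2; 3]]];
[::[::[::6; 0; 1; 3; 2; 4; 5]; [::6; 0; 1; 5; 2; 4; 3]]; [::[::6; 0; 2; 3; 1; 5; 4]; [::6; 0; 2; 4; 1; 5; 3]]; [::[::6; 0; 3; 4; 1; 2; 5]; [::6; 0; 3; 5; 1; 2; 4]]; [::[::6; 0; 4; 2; 1; 3; 5]; [::6; 0; 4; 5; 1; 3; 2]]; [::[::6; 0; 5; 2; 1; 4; 3]; [::6; 0; 5; 3; 1; 4; 2]]];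
[::[::[::6; 0; 1; 3; 2; 5; 4]; [::6; 0; 1; 4; 2; 5; 3]]; [::[::6; 0; 2; 4; 1; 3; 5]; [::6; 0; 2; 5; 1; 3; 4]]; [::[::6; 0; 3; 2; 1; 5; 4]; [::6; 0; 3; 4; 1; 5; 2]]; [::[::6; 0; 4; 3; 1; 2; 5]; [::6; 0; 4; 5; 1; 2; 3]]; [::[::6; 0; 5; 2; 1; 4; 3]; [::6; 0; 5; 3; 1; 4; 2]]];
[::[::[::6; 0; 1; 3; 2; 5; 4]; [::6; 0; 1; 4; 2; 5; 3]]; [::[::6; 0; 2; 3; 1; 4; 5]; [::6; 0; 2; 5; 1; 4; 3]]; [::[::6; 0; 3; 4; 1; 2; 5]; [::6; 0; 3; 5; 1; 2; 4]]; [::[::6; 0; 4; 2; 1; 5; 3]; [::6; 0; 4; 3; 1; 5; 2]]; [::[::6; 0; 5; 2; 1; 3; 4]; [::6; 0; 5; 4; 1; 3; 2]]]].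

Definition fanoL : seq (nat * nat * nat) :=
  [:: (0,1,2); (2,3,4); (0,4,5); (0,3,6); (2,5,6); (1,4,6); (1,3,5)].
Definition swp (v i : nat) : nat := if i == v then 6 else if i == 6 then v else i.
Definition pv v (s : seq nat) := map (swp v) s.
Definition img3 (s : seq nat) (L : nat * nat * nat) : seq nat :=
  [:: nth 0 s L.1.1; nth 0 s L.1.2; nth 0 s L.2].
Definition all3 : seq (seq nat) :=
  [seq a :: bc | a <- iota 0 7, bc <- [seq [:: b; c] | b <- iota 0 7, c <- iota 0 7]].
Definition trips (v : nat) : seq (seq nat) :=
  [seq l <- all3 | sorted ltn l && (v \notin l)].
Definition linkps v (m : seq (seq nat)) : seq (seq nat) :=
  flatten [seq [seq sort leq l | l <- [seq img3 (pv v s) L | L <- fanoL] & v \in l] | s <- m].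
Definition nonlinkok v s (k1 k2 : seq nat) :=
  all (fun l => (v \notin l) ==> (sort leq l != k1) && (sort leq l != k2))
      [seq img3 (pv v s) L | L <- fanoL].

Definition checkI := all (fun v => all (fun F => all (fun m => all (fun s =>
   [&& uniq (pv v s), all (fun x => x < 7) (pv v s), size s == 7 &
       all (fun L => uniq (img3 (pv v s) L) && all (fun x => x < 7) (img3 (pv v s) L)) fanoL]) m) F) table) (iota 0 7).
Definition checkA := all (fun v => all (fun F =>
   (4 < size F) && pairwise (fun A B => ~~ has (fun x => x \in A) B) (map (linkps v) F)) table) (iota 0 7).
Definition checkB := all (fun v => let tr := trips v in all (fun k1 => all (fun k2 =>
   has (fun x => x \in k2) k1 ==>
   has (fun F => all (fun m => has (fun s => nonlinkok v s k1 k2) m) F) table) tr) tr) (iota 0 7).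

Lemma cI : checkI = true. Proof. vm_cast_no_check (erefl true). Qed.
Lemma cA : checkA = true. Proof. vm_cast_no_check (erefl true). Qed.
Lemma cB : checkB = true. Proof. vm_cast_no_check (erefl true). Qed.

Section Pigeon.
Variable T : eqType.
Lemma cnt1 (p : T) (Vs : seq (seq T)) :
  pairwise (fun A B => ~~ has (fun x => x \in A) B) Vs -> count (fun V => p \in V) Vs <= 1.
Proof.
elim: Vs => [//|V Vs IH]; rewrite pairwise_cons => /andP [HV Hp] /=.
case: (boolP (p \in V)) => pV /=; last by rewrite add0n IH.
rewrite (eq_in_count (a2 := pred0)) ?count_pred0 // => W W_in /=.
apply/negP => pW; move/allP: HV => /(_ W W_in) /hasP; apply; by exists p.
Qed.

Lemma hitcnt (P : seq T) (Vs : seq (seq T)) :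
  pairwise (fun A B => ~~ has (fun x => x \in A) B) Vs ->
  count (fun V => has (fun p => p \in V) P) Vs <= size P.
Proof.
move=> Hp; elim: P => [|p P IH] /=.
  by rewrite (eq_in_count (a2 := pred0)) ?count_pred0.
have -> : count (fun V => has (fun p0 => p0 \in V) (p :: P)) Vs =
          count (predU (fun V => p \in V) (fun V => has (fun p0 => p0 \in V) P)) Vs by [].
have := count_predUI (fun V => p \in V) (fun V => has (fun p0 => p0 \in V) P) Vs.
have := cnt1 p Hp.
lia.
Qed.

Lemma pigeon (P : seq T) (Vs : seq (seq T)) :
  pairwise (fun A B => ~~ has (fun x => x \in A) B) Vs -> size P < size Vs ->
  has (fun V => all (fun p => p \notin V) P) Vs.
Proof.
move=> Hp Hs; rewrite has_count.
have := hitcnt P Hp.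
have := count_predC (fun V => has (fun p => p \in V) P) Vs.
have E : count (predC (fun V => has (fun p => p \in V) P)) Vs =
          count (fun V => all (fun p => p \notin V) P) Vs.
  apply: eq_count => V /=; rewrite -all_predC; exact: eq_all.
rewrite E => H1 H2.
rewrite lt0n; apply/eqP => H0; rewrite H0 addn0 in H1; rewrite H1 in H2.
by rewrite ltnNge H2 in Hs.
Qed.
End Pigeon.

Definition key (t : {set 'I_7}) : seq nat := [seq val i | i <- enum t].

Lemma key_sorted t : sorted ltn (key t).
Proof.
rewrite /key -[enum _](eq_filter (mem_enum _)).
rewrite -(eq_filter (mem_map val_inj _)) -filter_map.
by rewrite (sorted_filter ltn_trans) // unlock val_ord_enum iota_ltn_sorted.
Qed.

Lemma key_uniq t : uniq (key t).
Proof. by rewrite map_inj_uniq ?enum_uniq //; exact: val_inj. Qed.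

Lemma mem_key t (i : 'I_7) : (val i \in key t) = (i \in t).
Proof. by rewrite mem_map ?mem_enum //; exact: val_inj. Qed.

Lemma size_key t : size (key t) = #|t|.
Proof. by rewrite size_map cardE. Qed.

Lemma key_lt7 t x : x \in key t -> x < 7.
Proof. rewrite /key => /mapP [i _ E]. by rewrite E; exact: ltn_ord. Qed.

Lemma in_tri (i : 'I_7) a b c : a < 7 -> b < 7 -> c < 7 ->
  (i \in tri a b c) = (val i \in [:: a; b; c]).
Proof. by move=> ha hb hc; rewrite /tri !inE -!val_eqE /= !inordK // orbA. Qed.

Lemma mem_key_nat t x : (x \in key t) = (x < 7) && (inord x \in t).
Proof.
apply/idP/idP.
  move=> xk; have x7 := key_lt7 xk; rewrite x7 /=.
  by rewrite -mem_key /= inordK.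
by case/andP => x7; rewrite -mem_key /= inordK.
Qed.

Lemma key_tri a b c : a < 7 -> b < 7 -> c < 7 -> uniq [:: a; b; c] ->
  key (tri a b c) = sort leq [:: a; b; c].
Proof.
move=> ha hb hc u.
have P : perm_eq (key (tri a b c)) [:: a; b; c].
  apply: uniq_perm => //; first exact: key_uniq.
  move=> x; rewrite mem_key_nat.
  case x7: (x < 7) => /=; first by rewrite in_tri // /= inordK.
  by rewrite !inE; apply/esym/negbTE/negP => /or3P [] /eqP E; move: x7; rewrite E ?ha ?hb ?hc.
rewrite -(sorted_sort leq_trans (sub_sorted (@ltnW) (key_sorted _))).
by apply/(perm_sortP leq_total leq_trans anti_leq).
Qed.

Lemma card_tri a b c : a < 7 -> b < 7 -> c < 7 -> uniq [:: a; b; c] -> #|tri a b c| = 3.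
Proof. by move=> ha hb hc u; rewrite -size_key key_tri // size_sort. Qed.

Lemma tri_key (t : {set 'I_7}) : #|t| = 3 -> exists a b c,
  [/\ key t = [:: a; b; c], a < 7, b < 7, c < 7 & t = tri a b c].
Proof.
move=> t3; have := size_key t; rewrite t3.
case E: (key t) => [|a [|b [|c [|]]]] // _.
have ha : a < 7 by apply: (@key_lt7 t); rewrite E inE eqxx.
have hb : b < 7 by apply: (@key_lt7 t); rewrite E !inE eqxx orbT.
have hc : c < 7 by apply: (@key_lt7 t); rewrite E !inE eqxx !orbT.
exists a, b, c; split => //.
by apply/setP => i; rewrite in_tri // -E mem_key.
Qed.

Lemma imset_tri (s : seq nat) a b c : a < 7 -> b < 7 -> c < 7 ->
  [set (inord (nth 0 s i) : 'I_7) | i : 'I_7 in tri a b c] = tri (nth 0 s a) (nth 0 s b) (nth 0 s c).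
Proof. by move=> ha hb hc; rewrite /tri ?imsetU ?imsetU1 !imset_set1 /= !inordK. Qed.

Lemma mem_all3 a b c : a < 7 -> b < 7 -> c < 7 -> [:: a; b; c] \in all3.
Proof.
move=> ha hb hc; apply: (allpairs_f (fun a bc => a :: bc)); first by rewrite mem_iota.
by apply: (allpairs_f (fun b c => [:: b; c])); rewrite mem_iota.
Qed.

Definition Tv (v : 'I_7) : {set {set 'I_7}} := [set t : {set 'I_7} | (#|t| == 3) && (v \notin t)].
Definition LTv (v : 'I_7) : {set {set 'I_7}} := [set t : {set 'I_7} | (#|t| == 3) && (v \in t)].

Lemma pos (v : 'I_7) (X Y : {set 'I_7}) : #|X| = 3 -> #|Y| = 3 -> v \notin X -> v \notin Y ->
  X :&: Y = set0 ->
  exists g : 'I_6 -> 'I_7, [/\ injective g, g @: setT = [set~ v] &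
     [set g @: e | e : {set 'I_6} in B6] = Tv v :\: [set X; Y]].
Proof.
move=> X3 Y3 vX vY XY0.
have XYW : X :|: Y = [set~ v].
  apply/eqP; rewrite eqEcard; apply/andP; split.
    apply/subsetP => x; rewrite !inE => /orP [] xin; apply/eqP => xv; move: xin; rewrite xv.
      by rewrite (negbTE vX).
    by rewrite (negbTE vY).
  by rewrite cardsC1 card_ord cardsU X3 Y3 XY0 cards0.
have eX : size (enum X) = 3 by rewrite -cardE.
have eY : size (enum Y) = 3 by rewrite -cardE.
pose g (i : 'I_6) : 'I_7 := if i < 3 then nth v (enum X) i else nth v (enum Y) (i - 3).
have gX (i : 'I_6) : i < 3 -> g i \in X.
  by move=> hi; rewrite /g hi -mem_enum; apply: mem_nth; rewrite eX.
have gY (i : 'I_6) : ~~ (i < 3) -> g i \in Y.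
  rewrite /g => /negbTE ->; rewrite -mem_enum; apply: mem_nth; rewrite eY; have := ltn_ord i; lia.
have disj x : x \in X -> x \in Y -> False.
  move=> a b; have: x \in X :&: Y by rewrite inE a b.
  by rewrite XY0 inE.
have ginj : injective g.
  move=> i j E; case hi: (i < 3); case hj: (j < 3).
  - move: E; rewrite /g hi hj => /eqP; rewrite nth_uniq ?eX ?enum_uniq // => /eqP.
    exact: val_inj.
  - exfalso; apply: (disj (g i)); first exact: gX.
    by rewrite E; apply: gY; rewrite hj.
  - exfalso; apply: (disj (g j)); first exact: gX.
    by rewrite -E; apply: gY; rewrite hi.
  - have hi' := ltn_ord i; have hj' := ltn_ord j.
    move: E; rewrite /g hi hj; move/negbT: hi; move/negbT: hj; rewrite -!leqNgt => hj hi.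
    move/eqP; rewrite nth_uniq ?eY ?enum_uniq; try lia.
    by move/eqP => E; apply: ord_inj; lia.
have gBX : g @: B6X = X.
  apply/setP => x; apply/imsetP/idP.
    by case=> i; rewrite inE => hi ->; exact: gX.
  move=> xX; have := index_mem x (enum X); rewrite eX mem_enum xX => hidx.
  have h6 : index x (enum X) < 6 by apply: leq_trans hidx _.
  exists (Ordinal h6); first by rewrite inE.
  by rewrite /g /= hidx nth_index // mem_enum.
have gBY : g @: (~: B6X) = Y.
  apply/setP => x; apply/imsetP/idP.
    by case=> i; rewrite !inE => hi ->; apply: gY.
  move=> xY; have := index_mem x (enum Y); rewrite eY mem_enum xY => hidx.
  have h6 : index x (enum Y) + 3 < 6 by lia.
  exists (Ordinal h6); first by rewrite !inE /= -leqNgt leq_addl.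
  by rewrite /g /= ltnNge leq_addl /= addnK nth_index // mem_enum.
have gT : g @: setT = [set~ v] by rewrite -(setUCr B6X) imsetU gBX gBY.
exists g; split => //.
apply/setP => t; apply/imsetP/idP.
  case=> e; rewrite inE => /andP [/andP [/eqP e3 eX0] eY0] ->.
  rewrite !inE card_imset // e3 eqxx /=; apply/andP; split; first (apply/norP; split).
  - apply/eqP => E; have eB : e = B6X by apply: (imset_inj ginj); rewrite /= E gBX.
    by rewrite eB setDv eqxx in eY0.
  - apply/eqP => E; have eB : e = ~: B6X by apply: (imset_inj ginj); rewrite /= E gBY.
    by rewrite eB setIC setICr eqxx in eX0.
  - apply/imsetP => [[i _ E]]; have : g i \in [set~ v] by rewrite -gT imset_f.
    by rewrite -E in_setC1 eqxx.
rewrite !inE => /andP [nXY /andP [/eqP t3 vt]].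
have tE : g @: (g @^-1: t) = t.
  apply/setP => y; apply/imsetP/idP.
    by case=> i; rewrite inE => ? ->.
  move=> yt; have : y \in g @: setT.
    by rewrite gT in_setC1; apply/eqP => yv; rewrite -yv yt in vt.
  by case/imsetP => i _ yi; exists i; rewrite ?inE -?yi.
have e3 : #|g @^-1: t| = 3 by rewrite -(card_imset _ ginj) tE.
exists (g @^-1: t); last by rewrite tE.
rewrite inE e3 eqxx /=; apply/andP; split; apply/negP => /eqP E0.
  have : t \subset Y.
    rewrite -tE -gBY; apply: imsetS; rewrite -disjoints_subset -setI_eq0 E0 //.
  move=> tY; have : t == Y by rewrite eqEcard tY Y3 t3.
  by move=> /eqP tY'; rewrite tY' eqxx orbT in nXY.
have : t \subset X.
  rewrite -tE -gBX; apply: imsetS; rewrite -setD_eq0 E0 //.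
move=> tX; have : t == X by rewrite eqEcard tX X3 t3.
by move=> /eqP tX'; rewrite tX' eqxx in nXY.
Qed.

Lemma key_trips (v : 'I_7) t : t \in Tv v -> key t \in trips v.
Proof.
rewrite inE => /andP [/eqP t3 vt].
have [a [b [c [E ha hb hc tE]]]] := tri_key t3.
rewrite /trips mem_filter key_sorted /=.
have -> : (nat_of_ord v \notin key t) = true by rewrite mem_key.
by rewrite E mem_all3.
Qed.

Lemma fanoL_lt : all (fun L => (L.1.1 < 7) && (L.1.2 < 7) && (L.2 < 7)) fanoL.
Proof. by []. Qed.

Theorem lemma2p3 (H : hypergraph 7) (v : 'I_7) :
  uniform3 H -> ~ contains Fano H ->
  11 <= deg H v -> 18 <= #|del H v| ->
  del_iso_B6 H v.
Proof.
move=> U3 noF Hdeg Hdel.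
set D := del H v.
set L := [set e in H | v \in e].
have DT : D \subset Tv v.
  by apply/subsetP => e; rewrite !inE => /andP [eH ve]; rewrite U3 // eqxx ve.
have LT : L \subset LTv v.
  by apply/subsetP => e; rewrite !inE => /andP [eH ve]; rewrite U3 // eqxx ve.
have cT : #|Tv v| = 20.
  have -> : Tv v = [set A : {set 'I_7} | A \subset [set~ v] & #|A| == 3].
    apply/setP => A; rewrite !inE andbC; congr (_ && _).
    apply/idP/idP => [vA | sub].
      apply/subsetP => x xA; rewrite in_setC1; apply/eqP => xv.
      by rewrite -xv xA in vA.
    by apply/negP => vin; have := subsetP sub v vin; rewrite in_setC1 eqxx.
  by rewrite cards_draws cardsC1 card_ord.
have cLT : #|LTv v| = 15.
  have := cardsID [set A : {set 'I_7} | v \in A] [set A : {set 'I_7} | #|A| == 3].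
  rewrite card_draws card_ord.
  have -> : [set A : {set 'I_7} | #|A| == 3] :&: [set A : {set 'I_7} | v \in A] = LTv v.
    by apply/setP => A; rewrite !inE.
  have -> : [set A : {set 'I_7} | #|A| == 3] :\: [set A : {set 'I_7} | v \in A] = Tv v.
    by apply/setP => A; rewrite !inE andbC.
  rewrite cT; have b : 'C(7, 3) = 35 by [].
  by move=> E; apply/eqP; rewrite -(eqn_add2r 20) E.
set M := Tv v :\: D.
have cM : #|M| <= 2.
  have HD : 18 <= #|D| := Hdel.
  by rewrite /M cardsD (setIidPr DT) cT; lia.
set A := LTv v :\: L.
have cAc : #|A| <= 4.
  have HL : 11 <= #|L| := Hdeg.
  by rewrite /A cardsD (setIidPr LT) cLT; lia.
have v7 : nat_of_ord v \in iota 0 7 by rewrite mem_iota /=; exact: ltn_ord.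
have contra : forall t1 t2, t1 \in Tv v -> t2 \in Tv v -> t1 :&: t2 != set0 ->
    M \subset [set t1; t2] -> False.
  move=> t1 t2 T1 T2 share MS.
  have k1 := key_trips T1; have k2 := key_trips T2.
  have hk : has (fun x => x \in key t2) (key t1).
    case/set0Pn: share => x; rewrite inE => /andP [x1 x2].
    by apply/hasP; exists (nat_of_ord x); rewrite mem_key.
  move: cB; rewrite /checkB => /allP /(_ _ v7) /allP /(_ _ k1) /allP /(_ _ k2).
  move=> /implyP /(_ hk) /hasP [F Ftab HF].
  move: cA; rewrite /checkA => /allP /(_ _ v7) /allP /(_ _ Ftab) /andP [szF pw].
  set P := map key (enum A).
  have szP : size P < size (map (linkps v) F).
    by rewrite size_map /P size_map -cardE; exact: leq_ltn_trans cAc szF.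
  case/hasP: (pigeon pw szP) => V /mapP [m mF ->] HV.
  case/hasP: (allP HF m mF) => s sm ok.
  move: cI; rewrite /checkI => /allP /(_ _ v7) /allP /(_ _ Ftab) /allP /(_ _ mF) /allP /(_ _ sm).
  case/and4P => us lt7 sz7 Lok.
  set s' := pv v s in us lt7 Lok ok.
  have szs' : size s' = 7 by rewrite /s' /pv size_map; apply/eqP.
  have nlt : forall i : 'I_7, nth 0 s' i < 7.
    by move=> i; apply: (allP lt7); apply: mem_nth; rewrite szs'.
  apply: noF; exists (fun i => inord (nth 0 s' i)); split.
    move=> i j /(congr1 val) /=; rewrite !inordK //.
    by move/eqP; rewrite nth_uniq ?szs' // => /eqP; exact: ord_inj.
  have hL : forall a b c, (a, b, c) \in fanoL ->
      [set (inord (nth 0 s' i) : 'I_7) | i : 'I_7 in tri a b c] \in H.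
    move=> a b c Lin; have := allP fanoL_lt _ Lin; case/andP => /andP [ha hb] hc.
    rewrite imset_tri //.
    have := allP Lok _ Lin; rewrite /img3 => /andP [ul alt].
    move: alt => /and4P [xa xb xc _].
    set x := nth 0 s' a in ul xa *; set y := nth 0 s' b in ul xb *;
      set z := nth 0 s' c in ul xc *.
    have limg : [:: x; y; z] \in [seq img3 s' L | L <- fanoL] := map_f (img3 s') Lin.
    apply/negPn/negP => nH.
    case vl: (nat_of_ord v \in [:: x; y; z]).
      have tA : tri x y z \in A.
        rewrite /A /L !inE (negbTE nH) /= card_tri // eqxx /=.
        by move: vl; rewrite -in_tri // !inE.
      have : key (tri x y z) \in P by apply: map_f; rewrite mem_enum.
      rewrite key_tri // => kP.
      have : sort leq [:: x; y; z] \in linkps v m.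
        apply/flatten_mapP; exists s => //.
        apply: map_f; rewrite mem_filter vl /=.
        exact: limg.
      by rewrite (negbTE (allP HV _ kP)).
    have tM : tri x y z \in M.
      rewrite /M /D !inE (negbTE nH) /= card_tri // eqxx /=.
      by move/negbT: vl; rewrite -in_tri // !inE.
    have := allP ok _ limg; rewrite vl /= -key_tri //.
    have := subsetP MS _ tM; rewrite !inE => /orP [] /eqP ->.
      by rewrite eqxx.
    by rewrite eqxx andbF.
  move=> e; rewrite /Fano !inE => He.
  repeat (case/orP: He => He); move/eqP: He => ->; apply: hL; by rewrite /fanoL !inE.
have : #|M| = 0 \/ #|M| = 1 \/ #|M| = 2 by lia.
case=> [M0 | [M1 | M2]].
- have : 0 < #|Tv v| by rewrite cT.
  case/card_gt0P => t tT; exfalso; apply: (contra t t) => //.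
    rewrite setIid; apply/set0Pn.
    move: tT; rewrite inE => /andP [/eqP t3 _].
    by apply/card_gt0P; rewrite t3.
  by move/eqP: M0; rewrite cards_eq0 => /eqP ->; exact: sub0set.
- case/cards1P: (introT eqP M1) => t Mt.
  have : t \in M by rewrite Mt inE.
  rewrite /M in_setD => /andP [_ tT].
  exfalso; apply: (contra t t) => //.
    rewrite setIid; apply/set0Pn.
    move: tT; rewrite inE => /andP [/eqP t3 _].
    by apply/card_gt0P; rewrite t3.
  by rewrite Mt; apply/subsetP => x; rewrite !inE => ->.
case/cards2P: (introT eqP M2) => x [y [xy Mxy]].
have : x \in M by rewrite Mxy !inE eqxx.
rewrite /M in_setD => /andP [_ xT].
have : y \in M by rewrite Mxy !inE eqxx orbT.
rewrite /M in_setD => /andP [_ yT].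
case: (boolP (x :&: y == set0)) => [/eqP dxy | sxy]; last first.
  by exfalso; apply: (contra x y) => //; rewrite Mxy.
have DE : D = Tv v :\: [set x; y].
  rewrite -Mxy /M; apply/setP => e; rewrite !in_setD.
  case eD: (e \in D) => /=; first by rewrite (subsetP DT e eD).
  by case: (e \in Tv v).
move: xT yT; rewrite !inE => /andP [/eqP x3 vx] /andP [/eqP y3 vy].
have [g [gi gT gB]] := pos x3 y3 vx vy dxy.
by exists g; split => //; rewrite gB -DE.
Qed.
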